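(* Let $k$ be a positive integer such that $k+1$ is an odd prime, and let $p>k(k+1)$ be an odd prime. For every $\mathbf v\in N_k$ there exist $s\in\mathbb{Z}_{k+1}$ and $r\in\mathbb{Z}$ such that, working modulo $k+1$, every coordinate of $s\mathbf v+\mathbf r_k\!\left(\tfrac{r}{p}\right)$ lies in $\{1,\ldots,k-1\}$.
   Context: $\mathbb{Z}_{k+1}$ is the integers modulo $k+1$. $N_k:=\{\mathbf v\in\mathbb{Z}_{k+1}^k:\ \mathbf v\neq\mathbf 0 \text{ and } \mathbf v \text{ has at least one zero coordinate}\}$. For $x\in\mathbb{R}$, $\{x\}=x-\lfloor x\rfloor$ is the fractional part, and for $t\in\mathbb{R}$, $\mathbf r_k(t):=\big(\lfloor (k+1)\{t\}\rfloor,\lfloor (k+1)\{2t\}\rfloor,\ldots,\lfloor (k+1)\{kt\}\rfloor\big)\in\{0,\ldots,k\}^k$, reduced modulo $k+1$ when added to elements of $\mathbb{Z}_{k+1}^k$. *)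

(* Defs.v *)
From HB Require Import structures.
From mathcomp Require Import all_boot all_order all_algebra.
Set Implicit Arguments. Unset Strict Implicit. Unset Printing Implicit Defensive.
Import Order.TTheory GRing.Theory Num.Theory.
Local Open Scope ring_scope.

Definition frac (R : archiDomainType) (x : R) : R := x - (Num.floor x)%:~R.

(* vectors in Z_{k+1}^k, coordinates indexed by 'I_k (index i <-> coordinate i+1) *)
Definition zvec (k : nat) := {ffun 'I_k -> 'Z_(k.+1)}.

Definition in_Nk (k : nat) (v : zvec k) : bool :=
  (v != 0) && [exists i, v i == 0].

Definition rk (k : nat) (t : rat) : zvec k :=
  [ffun i : 'I_k =>
     ((Num.floor ((k.+1)%:R * frac ((i.+1)%:R * t)))%:~R : 'Z_(k.+1))].

(* Main.v *)
Require Import Defs.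
From HB Require Import structures.
From mathcomp Require Import all_boot all_order all_algebra.
From mathcomp Require Import all_field.
From mathcomp Require Import zify ring lra.
From Stdlib Require Import Classical.
Import Order.TTheory GRing.Theory Num.Theory.
Local Open Scope ring_scope.
Lemma floor_ndiv (N p : nat) : (0 < p)%N ->
  Num.floor ((N%:R : rat) / p%:R) = (N %/ p)%:Z.
Proof.
move=> p0; apply: floor_def.
have pn0 : (p%:R : rat) != 0 by rewrite pnatr_eq0 -lt0n.
have hN : (N%:R : rat) = (N%/p)%:R * p%:R + (N%%p)%:R.
  by rewrite {1}(divn_eq N p) natrD natrM.
rewrite hN mulrDl mulfK // intrD -!pmulrn.
rewrite lerDl divr_ge0 ?ler0n //= ltrD2l.
by rewrite ltr_pdivrMr ?ltr0n // mul1r ltr_nat ltn_mod.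
Qed.

Lemma frac_ndiv (N p : nat) : (0 < p)%N ->
  Defs.frac ((N%:R : rat) / p%:R) = (N %% p)%:R / p%:R.
Proof.
move=> p0; rewrite /Defs.frac floor_ndiv //.
have pn0 : (p%:R : rat) != 0 by rewrite pnatr_eq0 -lt0n.
have hN : (N%:R : rat) = (N%/p)%:R * p%:R + (N%%p)%:R.
  by rewrite {1}(divn_eq N p) natrD natrM.
rewrite hN mulrDl mulfK // -pmulrn; ring.
Qed.
Local Open Scope nat_scope.
Lemma core_nat (k p a j : nat) : (0 < j)%N -> (j <= k)%N -> (k * k.+1 < p)%N ->
  ((k.+1 * ((j * ((a * p) %/ k.+1).+1) %% p)) %/ p + k.+1 * ((j * ((a * p) %/ k.+1).+1) %/ p) = j * a)%N.
Proof.
move=> j0 jk kp.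
have p0 : (0 < p)%N by lia.
have hw : ((a * p) %% k.+1 < k.+1)%N by rewrite ltn_mod.
have ha := divn_eq (a * p) k.+1.
move: hw ha.
set u := (a * p) %/ k.+1. set w := (a * p) %% k.+1 => hw ha.
have hN := divn_eq (j * u.+1) p.
move: hN. set m := (j * u.+1) %/ p. set n := (j * u.+1) %% p => hN.
have hY : (j * (k.+1 - w) < p)%N.
  apply: (leq_ltn_trans _ kp); apply: leq_mul => //; exact: leq_subr.
have E : (k.+1 * n + p * (k.+1 * m) = p * (j * a) + j * (k.+1 - w))%N.
  have hz : (k.+1 - w + w = k.+1)%N by lia.
  move: hz; set z := (k.+1 - w) => hz.
  have S1 : (k.+1 * (j * u.+1) = k.+1 * n + p * (k.+1 * m))%N.
    by rewrite {1}hN; ring.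
  have S2 : (k.+1 * (j * u.+1) = j * (u * k.+1 + w) + j * z)%N.
    by rewrite -hz; ring.
  rewrite -S1 S2 -ha; ring.
have qm : (k.+1 * m <= j * a)%N by nia.
have E2 : (k.+1 * n = p * (j * a - k.+1 * m) + j * (k.+1 - w))%N by nia.
rewrite E2 [p * _]mulnC divnMDl // divn_small // addn0; lia.
Qed.

Local Open Scope ring_scope.
Lemma rk_choice (k p a : nat) : (0 < k)%N -> (k * k.+1 < p)%N ->
  exists r : int, forall i : 'I_k, rk k (r%:~R / p%:R) i = (a * i.+1)%:R.
Proof.
move=> k0 kp; have p0 : (0 < p)%N by lia.
exists (((a * p) %/ k.+1).+1)%:Z => i.
rewrite /rk ffunE -pmulrn mulrA -natrM frac_ndiv // mulrA -natrM floor_ndiv //.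
rewrite -pmulrn.
have := core_nat k p a i.+1 (ltn0Sn i) (ltn_ord i) kp.
move=> /(congr1 (fun n => (n%:R : 'Z_(k.+1)))).
rewrite natrD natrM pchar_Zp // mul0r addr0 => ->.
by rewrite mulnC.
Qed.
Section A.
Variables (F : finFieldType) (k : nat).
Hypothesis cardF : #|F| = k.+1.
Hypothesis charF : forall n, (n%:R == 0 :> F) = (k.+1 %| n)%N.
Hypothesis k0 : (0 < k)%N.

Lemma qF0 : (k.+1%:R : F) = 0.
Proof. by apply/eqP; rewrite charF. Qed.

Lemma card_nz : #|[set~ (0 : F)]| = k.
Proof. by rewrite cardsC1 cardF. Qed.

Lemma powsum m : (m < k)%N -> \sum_(d : F) d ^+ m = 0.
Proof.
move=> mk; case: m mk => [|m] mk.
  by rewrite (eq_bigr (fun _ => 1)) // sumr_const cardF qF0.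
case: (pickP (fun g : F => (g != 0) && (g ^+ m.+1 != 1))) => [g /andP[g0 gm] | H].
  have e : \sum_(d : F) d ^+ m.+1 = g ^+ m.+1 * \sum_(d : F) d ^+ m.+1.
    rewrite mulr_sumr (reindex_inj (mulfI g0)) /=.
    by apply: eq_bigr => d _; rewrite exprMn.
  apply/eqP; move: e => /eqP; rewrite -subr_eq0 -{1}[\sum_d _]mul1r -mulrBl mulf_eq0.
  by rewrite subr_eq0 eq_sym (negbTE gm).
exfalso.
have hp : ('X^(m.+1) - 1 : {poly F}) != 0.
  by rewrite -size_poly_eq0 size_XnsubC.
have := max_poly_roots hp (rs := enum [set~ (0 : F)]).
rewrite enum_uniq size_XnsubC // -cardE card_nz ltnS leqNgt mk.
suff hall : all (root ('X^(m.+1) - 1)) (enum [set~ (0 : F)]) by move/(_ hall isT).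
apply/allP => x; rewrite mem_enum in_setC1 => x0.
have := H x; rewrite /= x0 /= => /negbFE /eqP xm.
by rewrite /root !hornerE xm subrr.
Qed.

Lemma powsum_k : \sum_(d : F) d ^+ k = -1.
Proof.
rewrite (bigD1 0) //= expr0n eqn0Ngt k0 add0r.
rewrite (eq_bigr (fun _ => 1)); last first.
  move=> d d0; have := expf_card d; rewrite cardF exprS => h.
  by apply: (mulfI d0); rewrite h mulr1.
rewrite sumr_const.
have -> : #|[pred i : F | i != 0]| = k by rewrite -card_nz; apply: eq_card => x; rewrite in_setC1.
apply/eqP; rewrite -subr_eq0 opprK -mulrSr.
by rewrite qF0.
Qed.


Lemma sum_poly (e : 'I_k -> F) : \sum_(d : F) \prod_(i < k) (d - e i) = -1.
Proof.
pose P : {poly F} := \prod_(i < k) ('X - (e i)%:P).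
have sP : size P = k.+1.
  by rewrite /P size_prod_XsubC /index_enum unlock -enumT size_enum_ord.
have mP : P \is monic by apply: monic_prod_XsubC.
have lc : P`_k = 1 by move: mP => /monicP; rewrite lead_coefE sP.
have hP : forall d, \prod_(i < k) (d - e i) = \sum_(m < k.+1) P`_m * d ^+ m.
  move=> d; rewrite -sP -horner_coef /P horner_prod.
  by apply: eq_bigr => i _; rewrite hornerXsubC.
rewrite (eq_bigr _ (fun d _ => hP d)) exchange_big /= big_ord_recr /=.
rewrite big1 ?add0r; last first.
  move=> m _; rewrite -mulr_sumr powsum ?mulr0 //.
rewrite -mulr_sumr powsum_k lc mul1r //.
Qed.

Lemma prod_inj (f : 'I_k -> F) : injective f -> (forall i, f i != 0) ->
  \prod_i f i = \prod_(x | x != 0) x.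
Proof.
move=> fi fn.
have eS : f @: setT = [set~ (0 : F)].
  apply/eqP; rewrite eqEcard card_nz card_imset // cardsT card_ord leqnn andbT.
  by apply/subsetP => x /imsetP [i _ ->]; rewrite in_setC1.
rewrite (eq_bigl (fun x => x \in [set~ (0 : F)])); last by move=> x; rewrite in_setC1.
rewrite -eS big_imset /=; last by move=> x y _ _; apply: fi.
by apply: eq_bigl => i; rewrite in_setT.
Qed.

Lemma miss (f : 'I_k -> F) : (forall i, f i != 0) -> ~ injective f ->
  exists t, t != 0 /\ forall i, f i != t.
Proof.
move=> fn ni.
case: (pickP (fun t : F => (t != 0) && [forall i, f i != t])) => [t /andP[t0 /forallP ht] | H].
  by exists t.
exfalso; apply: ni.
have sub : [set~ (0 : F)] \subset f @: setT.
  apply/subsetP => x; rewrite in_setC1 => x0.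
  have := H x; rewrite /= x0 /= => /negbT; rewrite negb_forall => /existsP [i].
  by rewrite negbK => /eqP <-; apply: imset_f.
have : #|f @: setT| == #|[set: 'I_k]|.
  rewrite eqn_leq leq_imset_card /= cardsT card_ord -{1}card_nz.
  exact: subset_leq_card.
move=> /imset_injP fi x y; apply: fi; by rewrite in_setT.
Qed.

Lemma nat_inj a b : (a < k.+1)%N -> (b < k.+1)%N -> (a%:R = b%:R :> F) -> a = b.
Proof.
wlog ab : a b / (a <= b)%N.
  move=> W ha hb e; case: (leqP a b) => h; first exact: W.
  by symmetry; apply: W => //; apply: ltnW.
move=> ha hb e.
have : ((b - a)%N%:R == 0 :> F) by rewrite natrB // e subrr.
rewrite charF => /dvdn_leq.
case: (ltnP a b) => [lt|]; last by move=> ba _; apply/eqP; rewrite eqn_leq ab ba.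
move=> /(_ _); rewrite subn_gt0 => /(_ lt); lia.
Qed.


Hypothesis keven : ~~ odd k.

Lemma comb (v : 'I_k -> F) : (exists i, v i != 0) -> (exists i, v i = 0) ->
  exists s a : F, forall i, (s * v i + a * (i.+1)%:R != 0) && (s * v i + a * (i.+1)%:R != -1).
Proof.
move=> [i1 v1] [i0 v0].
pose j (i : 'I_k) : F := (i.+1)%:R.
have jn : forall i, j i != 0.
  move=> i; rewrite /j charF; apply/negP => /(dvdn_leq (ltn0Sn i)).
  by move=> h; have := ltn_ord i; lia.
have jinj : injective j.
  move=> x y /nat_inj h; apply: val_inj; apply/eqP; rewrite -eqSS; apply/eqP.
  by apply: h; rewrite ltnS.
apply: Classical_Prop.NNPP => H.
have inj : forall d, (forall i, v i - d * j i != 0) -> injective (fun i => v i - d * j i).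
  move=> d hd; apply: Classical_Prop.NNPP => ni.
  have [t [t0 ht]] := miss _ hd ni.
  apply: H; exists (- t^-1), (t^-1 * d) => i.
  have -> : - t^-1 * v i + t^-1 * d * (i.+1)%:R = - t^-1 * (v i - d * j i).
    rewrite /j; ring.
  rewrite mulf_eq0 oppr_eq0 invr_eq0 (negbTE t0) (negbTE (hd i)) /=.
  apply/negP => /eqP /(congr1 (fun z => - t * z)).
  rewrite mulrA mulrNN mulfV // mul1r mulrN1 opprK => h2.
  by have := ht i; rewrite h2 eqxx.
pose c0 : F := \prod_(x | x != 0) x.
have c0n : c0 != 0 by apply/prodf_neq0.
have cj : \prod_i j i = c0 by apply: prod_inj.
pose e i := v i / j i.
pose G d := \prod_(i < k) (d - e i).
have hG : forall d, \prod_i (v i - d * j i) = c0 * G d.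
  move=> d; rewrite -cj /G -big_split /=.
  rewrite (eq_bigr (fun i => - (j i * (d - e i)))); last first.
    move=> i _; rewrite /e; field; by move: (jn i); rewrite /j -add1n natrD.
  rewrite prodrN card_ord -signr_odd (negbTE keven) expr0 mul1r //.
have G01 : forall d, G d != 0 -> G d = 1.
  move=> d Gd.
  have hd : forall i, v i - d * j i != 0.
    move=> i; have : d - e i != 0.
      apply/negP => /eqP h; case/negP: Gd; apply/prodf_eq0; exists i => //; exact/eqP.
    move=> hne; have -> : v i - d * j i = - (j i * (d - e i)).
      by rewrite /e; field; move: (jn i); rewrite /j -add1n natrD.
    by rewrite oppr_eq0 mulf_neq0 // jn.
  have := hG d; rewrite (prod_inj _ (inj d hd) hd) -/c0 => /eqP.
  by rewrite -{1}[c0]mulr1 (inj_eq (mulfI c0n)) eq_sym => /eqP.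
have S1 : \sum_(d : F) G d = -1 := sum_poly e.
pose E := e @: [set: 'I_k].
have hGz : forall d, (G d == 0) = (d \in E).
  move=> d; apply/prodf_eq0/imsetP => [[i _]|[i _ ->]].
    by rewrite subr_eq0 => /eqP ->; exists i.
  by exists i => //; rewrite subrr.
have sumE : \sum_(d : F) G d = (#|~: E|)%:R.
  rewrite -sum1_card natr_sum [RHS]big_mkcond /=; apply: eq_bigr => d _.
  rewrite in_setC; case: (boolP (d \in E)) => h /=.
    by apply/eqP; rewrite hGz.
  by apply: G01; rewrite hGz.
have cE : (#|~: E| + #|E| = k.+1)%N by rewrite addnC cardsC cardF.
have E1 : (0 < #|E|)%N by apply/card_gt0P; exists (e i0); apply: imset_f.
have Ek : (#|E| <= k)%N by have := leq_imset_card e [set: 'I_k]; rewrite cardsT card_ord.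
have : ((#|~: E|).+1%:R == 0 :> F) by rewrite -addn1 natrD -sumE S1 addrC subrr.
rewrite charF => /(dvdn_leq (ltn0Sn _)) => hle.
have Eis1 : #|E| = 1%N by lia.
have e0 : e i0 = 0 by rewrite /e v0 mul0r.
have e1 : e i1 != 0 by rewrite /e mulf_neq0 // invr_neq0 // jn.
have : (#|[set e i0; e i1]| <= #|E|)%N.
  apply: subset_leq_card; apply/subsetP => x; rewrite !inE => /orP [/eqP->|/eqP->]; exact: imset_f.
by rewrite cards2 Eis1 e0 eq_sym e1.
Qed.

End A.

Theorem lemma4p3 (k p : nat) :
  (0 < k)%N -> prime k.+1 -> odd k.+1 ->
  prime p -> odd p -> (k * k.+1 < p)%N ->
  forall v : zvec k, in_Nk v ->
  exists (s : 'Z_(k.+1)) (r : int),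
    forall i : 'I_k,
      let c := s * v i + rk k (r%:~R / p%:R) i in
      (1 <= (c : nat) <= k.-1)%N.
Proof.
move=> k0 hq hodd hp hpodd kp v /andP [vnz /existsP [i0 /eqP vi0]].
have q1 : (1 < k.+1)%N by lia.
have keven : ~~ odd k by move: hodd.
have cardF : #|'F_(k.+1)| = k.+1 := card_Fp hq.
have charF : forall n, (n%:R == 0 :> 'F_(k.+1)) = (k.+1 %| n)%N.
  by move=> n; rewrite -val_eqE /= val_Fp_nat.
have vlt : forall x : 'Z_(k.+1), (x < k.+1)%N.
  by case=> m /=; rewrite Zp_cast.
pose w i : 'F_(k.+1) := (nat_of_ord (v i))%:R.
have wE : forall i, (w i == 0) = (v i == 0).
  move=> i; rewrite /w charF; apply/idP/idP => [h|/eqP->//].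
  have : (nat_of_ord (v i) == 0)%N.
    by move: h; rewrite /dvdn modn_small // vlt.
  by move=> /eqP h0; apply/eqP; apply: val_inj.
have [i1 v1] : exists i, v i != 0.
  case: (pickP (fun i => v i != 0)) => [i hi|H]; first by exists i.
  by case/eqP: vnz; apply/ffunP => i; have := H i; rewrite /= ffunE => /negbFE /eqP.
have ex1 : exists i, w i != 0 by exists i1; rewrite wE.
have ex0 : exists i, w i = 0 by exists i0; apply/eqP; rewrite wE vi0.
have [s' [a' ha]] := comb _ _ cardF charF k0 keven w ex1 ex0.
have [r hr] := rk_choice k p (nat_of_ord a') k0 kp.
exists ((nat_of_ord s')%:R), r => i; cbv zeta.
rewrite hr.
set N := (nat_of_ord s' * nat_of_ord (v i) + nat_of_ord a' * i.+1)%N.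
have cE : ((nat_of_ord s')%:R * v i + (nat_of_ord a' * i.+1)%:R : 'Z_(k.+1)) = N%:R.
  by rewrite /N natrD !natrM natr_Zp.
rewrite cE val_Zp_nat //.
have yE : s' * w i + a' * (i.+1)%:R = N%:R.
  by rewrite /N natrD !natrM /w natr_Zp [in RHS]natr_Zp.
move: (ha i); rewrite yE => /andP [y0 y1].
have n0 : (N %% k.+1 != 0)%N.
  by move: y0; rewrite charF /dvdn.
have nk : (N %% k.+1 != k)%N.
  apply: contra y1 => /eqP h; rewrite -Fp_nat_mod // h.
  by rewrite -addr_eq0 natr1 pchar_Fp_0.
have := ltn_mod N k.+1; lia.
Qed.
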